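(* Let $\Omega=\{1,\dots,m\}^{\mathbb{N}}$ with shift $\sigma$, let $\mathcal{M}$ be the set of Borel probabilities on $\Omega$ with the Monge–Kantorovich metric $d_{MK}$, and let $\mathfrak{T}:\mathcal{M}\to\mathcal{M}$ be the push-forward map $\mathfrak{T}(\mu)(E)=\mu(\sigma^{-1}(E))$. Given $\epsilon>0$, a probability $\tilde\mu_2\in\mathcal{M}$, and a $\sigma$-invariant probability $\tilde\mu_1\in\mathcal{M}$, there exist $\rho_1,\mu_2\in\mathcal{M}$ and an integer $N>0$ such that $d_{MK}(\rho_1,\tilde\mu_1)<\epsilon$, $d_{MK}(\mu_2,\tilde\mu_2)<\epsilon$, and $\mathfrak{T}^N(\rho_1)=\mu_2$.
   Context: $\Omega$ carries the metric $d_\Omega(\alpha,\beta)=0$ if $\alpha=\beta$ and $d_\Omega(\alpha,\beta)=2^{-k}$ where $k=\min\{i:\alpha_i\neq\beta_i\}$ otherwise. The Monge–Kantorovich metric on $\mathcal{M}$ is $d_{MK}(\mu,\nu)=\sup\{\int f\,d\mu-\int f\,d\nu : f:\Omega\to\mathbb{R}\ \text{1-Lipschitz}\}$. $\sigma(x_1,x_2,\dots)=(x_2,x_3,\dots)$. *)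

(* Defs.v *)
From HB Require Import structures.
From mathcomp Require Import all_boot all_order all_algebra.
From mathcomp Require Import all_classical all_reals all_analysis.
Set Implicit Arguments. Unset Strict Implicit. Unset Printing Implicit Defensive.
Import Order.TTheory GRing.Theory Num.Theory.
Import numFieldNormedType.Exports.
Local Open Scope classical_set_scope.
Local Open Scope ring_scope.

(* Omega = {0,...,m}^N : sequences over an alphabet of m.+1 symbols
   (so every alphabet size >= 1 is covered). Indices start at 0. *)
Definition Seq (m : nat) : Type := nat -> 'I_m.+1.
HB.instance Definition _ (m : nat) := gen_eqMixin (Seq m).
HB.instance Definition _ (m : nat) := gen_choiceMixin (Seq m).
HB.instance Definition _ (m : nat) := isPointed.Build (Seq m) (fun _ => ord0).


Definition lshift_seq (m : nat) (x : Seq m) : Seq m := fun n => x n.+1.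

Definition dOmega (R : realType) (m : nat) (a b : Seq m) : R :=
  match pselect (exists i, a i != b i) with
  | left h => (2^-1) ^+ (ex_minn h)
  | right _ => 0
  end.

Definition dopen (R : realType) (m : nat) (A : set (Seq m)) : Prop :=
  forall x, A x -> exists e : R, 0 < e /\ forall y, dOmega R x y < e -> A y.

Definition Omega (R : realType) (m : nat)
  : measurableType (sigma_display (@dopen R m)) :=
  g_sigma_algebraType (@dopen R m).

Definition Lip1 (R : realType) (m : nat) (f : Seq m -> R) : Prop :=
  forall x y, `|f x - f y| <= dOmega R x y.

Definition dMK (R : realType) (m : nat) (mu nu : probability (Omega R m) R)
  : \bar R :=
  ereal_sup [set ((\int[mu]_x (f x)%:E) - (\int[nu]_x (f x)%:E))%E
            | f in [set f | @Lip1 R m f]].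

Definition shift_invariant (R : realType) (m : nat)
  (mu : probability (Omega R m) R) : Prop :=
  forall E : set (Omega R m), measurable E ->
    mu ((@lshift_seq m) @^-1` E) = mu E.

(* Main.v *)
Require Import Defs.
From HB Require Import structures.
From mathcomp Require Import all_boot all_order all_algebra.
From mathcomp Require Import all_classical all_reals all_analysis.
From mathcomp Require Import lra.
From mathcomp Require Import measurable_realfun.
Import Order.TTheory GRing.Theory Num.Theory.
Local Open Scope classical_set_scope.
Local Open Scope ring_scope.
Set Implicit Arguments. Unset Strict Implicit. Unset Printing Implicit Defensive.

Section dO.
Variables (R : realType) (m : nat).
Implicit Types a b : Seq m.

Lemma half_ge0 : 0 <= (2^-1 : R). Proof. by rewrite invr_ge0. Qed.
Lemma half_le1 : (2^-1 : R) <= 1. Proof. by rewrite invf_le1 // ler1n. Qed.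

Lemma dO_ge0 a b : 0 <= dOmega R a b.
Proof. rewrite /dOmega; case: pselect => // h; exact: exprn_ge0 half_ge0. Qed.

Lemma dO_agree a b k : (forall i, (i < k)%N -> a i = b i) -> dOmega R a b <= (2^-1)^+k.
Proof.
move=> hab; rewrite /dOmega; case: pselect => [h|_]; last exact: exprn_ge0 half_ge0.
case: ex_minnP => j hj hmin; apply: ler_wiXn2l; [exact: half_ge0|exact: half_le1|].
rewrite leqNgt; apply/negP => jk; by rewrite hab ?eqxx in hj.
Qed.

Lemma dO_lt a b k : dOmega R a b < (2^-1)^+k -> forall i, (i <= k)%N -> a i = b i.
Proof.
move=> hd i ik; apply/eqP; apply/negPn/negP => hi.
move: hd; rewrite /dOmega; case: pselect => [h|nh]; last by exfalso; apply: nh; exists i.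
case: ex_minnP => j hj hmin.
have ji : (j <= k)%N by apply: leq_trans (hmin _ hi) ik.
rewrite ltNge (ler_wiXn2l half_ge0 half_le1 ji) //.
Qed.

Lemma dO_le1 a b : dOmega R a b <= 1.
Proof. by rewrite -(expr0 (2^-1 : R)); apply: dO_agree. Qed.

Lemma half_small (e : R) : 0 < e -> exists k, (2^-1)^+k < e.
Proof.
move=> e0; have [k hk] : exists k : nat, e^-1 < k%:R.
  by exists (Num.bound (e^-1)); apply: archi_boundP; rewrite invr_ge0 ltW.
exists k; rewrite exprVn invf_plt ?posrE ?exprn_gt0 //.
apply: (lt_le_trans hk); rewrite -natrX ler_nat.
by apply: ltnW; apply: ltn_expl.
Qed.

End dO.

Definition PhiR (R : realType) (m N : nat) (p : Omega R m * Omega R m) : Omega R m :=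
  fun n => if (n < N)%N then p.1 n else p.2 (n - N)%N.

Section Phi.
Variables (R : realType) (m N : nat).

Definition cyl (w : Seq m) : set (Omega R m) := [set z | forall k, (k < N)%N -> z k = w k].
Definition pre (w : Seq m) (A : set (Omega R m)) : set (Omega R m) :=
  [set y | A (@PhiR R m N (w, y))].

Lemma dopen_cyl w : dopen R (cyl w).
Proof.
move=> z hz; exists ((2^-1)^+N); split; first by rewrite exprn_gt0 // invr_gt0.
move=> y hy k hk; rewrite -hz //; symmetry; apply: (dO_lt hy); exact: ltnW.
Qed.

Lemma dopen_pre w A : dopen R A -> dopen R (pre w A).
Proof.
move=> oA y hy; have [e [e0 he]] := oA _ hy; have [k hk] := half_small e0.
exists ((2^-1)^+k); split; first by rewrite exprn_gt0 // invr_gt0.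
move=> y' hy'; apply: he; apply: (le_lt_trans _ hk); apply: dO_agree.
move=> i hi; rewrite /PhiR /=; case: ifP => // _; apply: (dO_lt hy').
by apply: leq_trans (leq_subr N i) (ltnW hi).
Qed.

Lemma Phi_ext z z' y : (forall k, (k < N)%N -> z k = z' k) -> @PhiR R m N (z, y) = @PhiR R m N (z', y).
Proof.
move=> h; apply: funext => n; rewrite /PhiR /=; case: ifP => // hn; exact: h.
Qed.

Definition wseq (w : N.-tuple 'I_m.+1) : Seq m := fun k => nth ord0 w k.
Definition wtup (z : Seq m) : N.-tuple 'I_m.+1 := [tuple of map z (iota 0 N)].

Lemma wtupE z k : (k < N)%N -> wseq (wtup z) k = z k.
Proof. by move=> hk; rewrite /wseq /= (nth_map 0) ?size_iota // nth_iota. Qed.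

Lemma Phi_meas : measurable_fun setT (@PhiR R m N).
Proof.
apply: (@measurability _ _ _ (Omega R m) _ _ (@dopen R m)) => //.
move=> _ [A oA <-]; rewrite setTI.
rewrite (_ : @PhiR R m N @^-1` A = \bigcup_(w in [set: N.-tuple 'I_m.+1])
   (cyl (wseq w) `*` pre (wseq w) A)); last first.
  apply/seteqP; split => [[z y] /= hA|[z y] [w _ [/= hz hy]]].
    exists (wtup z) => //; split => /=.
      by move=> k hk; rewrite wtupE.
    by rewrite /pre /= (@Phi_ext _ z) // => k hk; rewrite wtupE.
  by rewrite (@Phi_ext _ (wseq w)).
apply: fin_bigcup_measurable; first exact: finite_finset.
move=> w _; apply: measurableX; apply: sub_sigma_algebra.
  exact: dopen_cyl.
exact: dopen_pre.
Qed.

End Phi.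

HB.instance Definition _ (R : realType) (m N : nat) :=
  isMeasurableFun.Build _ _ _ _ (@PhiR R m N) (@Phi_meas R m N).

Definition rho (R : realType) (m N : nat) (mu1 mu2 : probability (Omega R m) R)
  : probability (Omega R m) R :=
  distribution (mu1 \x mu2)%E (@PhiR R m N : {mfun _ >-> _}).

Section Int.
Variable R : realType.

Lemma int_bdd d (T : measurableType d) (P : probability T R) (g : T -> R) (M : R) :
  measurable_fun setT g -> (forall x, `|g x| <= M) -> P.-integrable setT (EFin \o g).
Proof.
move=> mg hb; apply: measurable_bounded_integrable => //.
  by apply: (le_lt_trans (probability_le1 P measurableT)); rewrite ltry.
exists M; split; first exact: num_real.
by move=> M' hM' x _; apply: le_trans (hb x) (ltW hM').
Qed.

Variable m : nat.

Lemma Lip_meas (f : Omega R m -> R) : Lip1 f -> measurable_fun setT f.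
Proof.
move=> Lf; apply: measurability; first exact: (measurable_realfun.RGenOInfty.measurableE R).
move=> _ [_ [x ->] <-]; rewrite setTI; apply: sub_sigma_algebra.
move=> z /=; rewrite in_itv /= andbT => hz.
exists (f z - x); split; first by rewrite subr_gt0.
move=> y hy; rewrite /= in_itv /= andbT.
have := Lf z y; have := ler_norm (f z - f y); lra.
Qed.

Lemma Lip_bdd (f : Omega R m -> R) : Lip1 f -> forall x, `|f x| <= `|f (fun _ => ord0)| + 1.
Proof.
move=> Lf x; have := Lf x (fun _ => ord0); have := dO_le1 R x (fun _ => ord0).
have := ler_normB (f x - f (fun _ => ord0)) (- f (fun _ => ord0)).
rewrite opprK subrK normrN; lra.
Qed.

End Int.

Section Main.
Variables (R : realType) (m : nat).
Local Open Scope ereal_scope.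

Lemma sub_self_le0 (x : \bar R) : x - x <= 0.
Proof. by case: x => [r| |] /=; [rewrite -EFinD subrr|rewrite leNye|rewrite leNye]. Qed.

Lemma dMK_self (mu : probability (Omega R m) R) : dMK mu mu <= 0.
Proof. by apply: ge_ereal_sup => _ [f _ <-]; exact: sub_self_le0. Qed.

Lemma dMK_rho (N : nat) (mu1 mu2 : probability (Omega R m) R) :
  dMK (rho N mu1 mu2) mu1 <= ((2^-1)^+N)%:E.
Proof.
apply: ge_ereal_sup => _ [f Lf <-].
have mf := Lip_meas Lf.
set M := (`|f (fun _ => ord0)| + 1)%R.
have bf := Lip_bdd Lf.
set pi := (mu1 \x mu2).
have intPhi : pi.-integrable setT (EFin \o (f \o @PhiR R m N)).
  apply: (@int_bdd _ _ _ _ _ M); last by move=> x; exact: bf.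
  exact: measurableT_comp mf (@Phi_meas R m N).
have intfst : pi.-integrable setT (EFin \o (f \o fst)).
  apply: (@int_bdd _ _ _ _ _ M); last by move=> x; exact: bf.
  exact: measurableT_comp mf measurable_fst.
rewrite /rho /distribution.
rewrite integral_pushforward //; last exact/measurable_EFinP.
rewrite (_ : @PhiR R m N @^-1` setT = setT) //.
rewrite (_ : \int[mu1]_x (f x)%:E = \int[pushforward pi fst]_x (f x)%:E); last first.
  apply: eq_measure_integral => A mA _.
  change (mu1 A = (mu1 \x mu2) (fst @^-1` A)).
  rewrite -setXT product_measure1E //.
  by rewrite -[LHS]mule1; congr (_ * _); apply/esym; exact: probability_setT.
rewrite integral_pushforward //; last exact/measurable_EFinP.
rewrite (_ : fst @^-1` setT = setT) //.
rewrite -integralB //.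
apply: (@le_trans _ _ (\int[pi]_x (cst ((2^-1)^+N)%:E x))).
  apply: le_integral => //.
  - exact: (integrableB measurableT intPhi intfst).
  - apply: (@int_bdd _ _ _ _ (fun _ => ((2^-1)^+N)%R) ((2^-1)^+N)%R) => //.
    by move=> x; rewrite ger0_norm // exprn_ge0 // half_ge0.
  - move=> [z y] _ /=; rewrite -EFinD lee_fin; apply: le_trans (ler_norm _) _.
    apply: le_trans (Lf _ _) _; apply: dO_agree => i hi; by rewrite /PhiR /= hi.
rewrite integral_cst // /pi.
rewrite -[leRHS]mule1; apply: lee_pmul => //.
exact: (probability_le1 (mu1 \x mu2)%E measurableT).
Qed.
End Main.

Lemma iter_shift (m n : nat) (z : Seq m) i : iter n (@lshift_seq m) z i = z (i + n)%N.
Proof.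
elim: n i => [|n IH] i /=; first by rewrite addn0.
by rewrite /lshift_seq IH addSnnS.
Qed.

Lemma iter_Phi (R : realType) (m N : nat) (p : Omega R m * Omega R m) :
  iter N (@lshift_seq m) (@PhiR R m N p) = p.2.
Proof.
apply: funext => i; rewrite iter_shift /PhiR.
by rewrite ltnNge leq_addl /= addnK.
Qed.

Theorem theorem2p8 (R : realType) (m : nat) (eps : R)
  (mu2t mu1t : probability (Omega R m) R) :
  0 < eps -> shift_invariant mu1t ->
  exists (rho1 mu2 : probability (Omega R m) R) (N : nat),
    (0 < N)%N /\
    (dMK rho1 mu1t < eps%:E)%E /\
    (dMK mu2 mu2t < eps%:E)%E /\
    (forall E : set (Omega R m), measurable E ->
       mu2 E = rho1 ((iter N (@lshift_seq m)) @^-1` E)).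
Proof.
move=> e0 _; have [k hk] := half_small e0.
exists (rho k.+1 mu1t mu2t), mu2t, k.+1; split => //; split.
  apply: (le_lt_trans (dMK_rho _ _ _)); rewrite lte_fin; apply: le_lt_trans hk.
  by apply: ler_wiXn2l; [exact: half_ge0|exact: half_le1|exact: leqnSn].
split; first by apply: (le_lt_trans (dMK_self _)); rewrite lte_fin.
move=> E mE.
change (mu2t E = (mu1t \x mu2t)%E (@PhiR R m k.+1 @^-1` (iter k.+1 (@lshift_seq m) @^-1` E))).
rewrite (_ : @PhiR R m k.+1 @^-1` (iter k.+1 (@lshift_seq m) @^-1` E) = setT `*` E).
  rewrite product_measure1E //.
  by rewrite -[LHS]mul1e; congr (_ * _)%E; apply/esym; exact: probability_setT.
apply/seteqP; split => [[x y]|[x y]]; rewrite /preimage /=;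
  have := @iter_Phi R m k.+1 (x, y); rewrite /= => -> //.
by case.
Qed.
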